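(* In Algorithm SC (with $|b(v)|\le\deg(v)$ for all $v$ and $\alpha\in(0,1/4]$), for every round $i$ and every $v\in V$: if $\tilde\phi^i_v>0$ then $r^{\le i-1}_v\ge\frac{\ln n}{\alpha}$, and if $\tilde\phi^i_v<0$ then $r^{\le i-1}_v\le-\frac{\ln n}{\alpha}$.
   Context: Let $G=(V,E)$ be a unit-capacity undirected graph, $n=|V|\ge3$, every vertex of degree $\deg(v)\ge1$, each edge with a fixed arbitrary orientation; $B\in\mathbb R^{V\times E}$ is the incidence matrix (column $(u,v)$ has $+1$ in row $u$, $-1$ in row $v$, $0$ elsewhere). Algorithm SC takes $b\in\mathbb R^V$ with $|b(v)|\le\deg(v)$ for all $v$, $\alpha\in(0,1/4]$ and an integer $T\ge1$. Set $w^1_{v,+}=w^1_{v,-}=1$ for all $v$. For $i=1,\dots,T$: (1) for $\circ\in\{+,-\}$, $\tilde w^i_{v,\circ}=w^i_{v,\circ}$ if $w^i_{v,\circ}\ge n$ and $\tilde w^i_{v,\circ}=0$ otherwise; (2) $\tilde\phi^i_v=(\tilde w^i_{v,+}-\tilde w^i_{v,-})/\deg(v)$; (3) for each edge $(u,v)$, $f^i(u,v)=+1$ if $\tilde\phi^i_u>\tilde\phi^i_v$, $-1$ if $\tilde\phi^i_u<\tilde\phi^i_v$, $0$ otherwise; (4) if $\langle\tilde\phi^i,b\rangle>\langle\tilde\phi^i,Bf^i\rangle$, terminate; (5) $r^i_v=(b(v)-(Bf^i)_v)/\deg(v)$; (6) $w^{i+1}_{v,+}=w^i_{v,+}(1+\alpha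 r^i_v)$ and $w^{i+1}_{v,-}=w^i_{v,-}(1-\alpha r^i_v)$. Write $r^{\le i}_v=\sum_{i'=1}^{i}r^{i'}_v$, with $r^{\le 0}_v=0$. *)

(* Defs.v *)
From HB Require Import structures.
From mathcomp Require Import all_boot all_order all_algebra.
From mathcomp Require Import reals exp.
Set Implicit Arguments. Unset Strict Implicit. Unset Printing Implicit Defensive.
Import Order.TTheory GRing.Theory Num.Theory.
Local Open Scope ring_scope.

(* Graph G = (V,E): V, E finite types; each edge e has a fixed orientation
   (src e, dst e).  Algorithm SC with input b, alpha. *)
Section SC.
Context (R : realType) (V E : finType) (src dst : E -> V)
        (b : V -> R) (alpha : R).

Definition deg (v : V) : R := (#|[set e | (src e == v) || (dst e == v)]|)%:R.

Definition nV : R := (#|V|)%:R.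

(* (B f)_v for the incidence matrix B: column (u,v) has +1 at u, -1 at v *)
Definition Bmul (f : E -> R) (v : V) : R :=
  \sum_(e | src e == v) f e - \sum_(e | dst e == v) f e.

Definition trunc_w (w : R) : R := if nV <= w then w else 0.

Definition phi_of (wp wm : V -> R) (v : V) : R :=
  (trunc_w (wp v) - trunc_w (wm v)) / deg v.

Definition flow_of (phi : V -> R) (e : E) : R :=
  if phi (dst e) < phi (src e) then 1
  else if phi (src e) < phi (dst e) then -1 else 0.

Definition resid_of (phi : V -> R) (v : V) : R :=
  (b v - Bmul (flow_of phi) v) / deg v.

(* weights_at k = (w^{k+1}_{.,+}, w^{k+1}_{.,-}) ; step (6) *)
Fixpoint weights_at (k : nat) : (V -> R) * (V -> R) :=
  match k with
  | 0 => (fun _ => 1, fun _ => 1)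
  | k'.+1 =>
      let: (wp, wm) := weights_at k' in
      let r := resid_of (phi_of wp wm) in
      (fun v => wp v * (1 + alpha * r v), fun v => wm v * (1 - alpha * r v))
  end.

(* round-i quantities, i >= 1 *)
Definition w_plus (i : nat) : V -> R := (weights_at i.-1).1.
Definition w_minus (i : nat) : V -> R := (weights_at i.-1).2.
Definition phi_t (i : nat) : V -> R := phi_of (w_plus i) (w_minus i).
Definition f_round (i : nat) : E -> R := flow_of (phi_t i).
Definition r_round (i : nat) : V -> R := resid_of (phi_t i).

Definition r_le (i : nat) (v : V) : R := \sum_(1 <= k < i.+1) r_round k v.

Definition terminates_at (i : nat) : bool :=
  \sum_v phi_t i v * Bmul (f_round i) v < \sum_v phi_t i v * b v.

End SC.

(* Main.v *)
Require Import Defs.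
From HB Require Import structures.
From mathcomp Require Import all_boot all_order all_algebra.
From mathcomp Require Import reals exp.
From mathcomp Require Import sequences.
From mathcomp Require Import lra.
Import Order.TTheory GRing.Theory Num.Theory.
Local Open Scope ring_scope.

Lemma flow_bound (R : realType) (V E : finType) (src dst : E -> V) (phi : V -> R) e :
  `|flow_of src dst phi e| <= 1.
Proof.
rewrite /flow_of; case: ifP => _; first by rewrite normr1.
case: ifP => _; by rewrite ?normrN ?normr1 ?normr0.
Qed.

Lemma Bmul_bound (R : realType) (V E : finType) (src dst : E -> V) (f : E -> R) v :
  (forall e, `|f e| <= 1) -> (forall e, src e != dst e) ->
  `|Bmul src dst f v| <= deg R src dst v.
Proof.
move=> hf hsd.
rewrite /Bmul /deg -sum1_card natr_sum.
apply: (le_trans (ler_normB _ _)).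
apply: (@le_trans _ _ (\sum_(e | src e == v) 1 + \sum_(e | dst e == v) (1:R))).
  by apply: lerD; apply: (le_trans (ler_norm_sum _ _ _)); apply: ler_sum => e _.
rewrite [X in _ <= X](big_mkcond (fun e => e \in _)).
rewrite (big_mkcond (fun e => src e == v)) (big_mkcond (fun e => dst e == v)) -big_split /=.
apply: ler_sum => e _; rewrite inE.
case: (boolP (src e == v)) => hs; case: (boolP (dst e == v)) => hd /=.
- by move: (hsd e); rewrite (eqP hs) (eqP hd) eqxx.
- by rewrite addr0.
- by rewrite add0r.
- by rewrite addr0.
Qed.

Lemma resid_bound (R : realType) (V E : finType) (src dst : E -> V) (b : V -> R) (phi : V -> R) v :
  (forall e, src e != dst e) ->
  (forall v, 1 <= deg R src dst v) ->
  (forall v, `|b v| <= deg R src dst v) ->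
  `|resid_of src dst b phi v| <= 2.
Proof.
move=> hsd hdeg hb.
have d0 : 0 < deg R src dst v by apply: lt_le_trans (hdeg v).
rewrite /resid_of normrM normfV (gtr0_norm d0) ler_pdivrMr //.
apply: (le_trans (ler_normB _ _)).
have := @Bmul_bound R V E src dst (flow_of src dst phi) v (flow_bound R V E src dst phi) hsd.
have := hb v. lra.
Qed.



Lemma weights_bound (R : realType) (V E : finType) (src dst : E -> V) (b : V -> R) (alpha : R) v :
  (forall e, src e != dst e) ->
  (forall v, 1 <= deg R src dst v) ->
  (forall v, `|b v| <= deg R src dst v) ->
  0 < alpha -> alpha <= 1 / 4 ->
  forall j,
  [/\ 0 <= (weights_at src dst b alpha j).1 v,
      (weights_at src dst b alpha j).1 v <= expR (alpha * r_le src dst b alpha j v),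
      0 <= (weights_at src dst b alpha j).2 v &
      (weights_at src dst b alpha j).2 v <= expR (- (alpha * r_le src dst b alpha j v))].
Proof.
move=> hsd hdeg hb a0 a4; elim=> [|j IH].
  by rewrite /r_le big_geq //= mulr0 oppr0 expR0 ler01 lexx.
have hr := @resid_bound R V E src dst b (phi_of src dst (weights_at src dst b alpha j).1
                 (weights_at src dst b alpha j).2) v hsd hdeg hb.
rewrite /r_le big_nat_recr //=.
move: IH hr.
rewrite /r_le /r_round /phi_t /w_plus /w_minus /=.
set S := \sum_(1 <= i < j.+1) _.
case: (weights_at src dst b alpha j) => wp wm /= [h1 h2 h3 h4] hr.
set r := resid_of _ _ _ _ v.
have hr' : -2 <= r <= 2 by rewrite -ler_norml.
case/andP: hr' => hrl hru.
have ar : - (1/2) <= alpha * r <= 1/2.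
  apply/andP; split; nra.
case/andP: ar => arl aru.
split.
- apply: mulr_ge0 => //; lra.
- rewrite [alpha * (S + r)]mulrDr expRD; apply: ler_pM => //; first lra.
  exact: expR_ge1Dx.
- apply: mulr_ge0 => //; lra.
- rewrite [alpha * (S + r)]mulrDr opprD expRD; apply: ler_pM => //; first lra.
  have := expR_ge1Dx (- (alpha * r)); lra.
Qed.

Theorem lemma2p7 (R : realType) (V E : finType) (src dst : E -> V)
    (b : V -> R) (alpha : R) (T : nat) :
  (2 < #|V|)%N ->
  (forall e, src e != dst e) ->
  (forall v, 1 <= deg R src dst v) ->
  (forall v, `|b v| <= deg R src dst v) ->
  0 < alpha -> alpha <= 1 / 4 ->
  (1 <= T)%N ->
  forall i : nat, (1 <= i <= T)%N ->
  (* round i is actually executed: no termination in rounds 1, ..., i-1 *)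
  (forall k : nat, (1 <= k < i)%N -> ~~ terminates_at src dst b alpha k) ->
  forall v : V,
    (0 < phi_t src dst b alpha i v ->
       ln (nV R V) / alpha <= r_le src dst b alpha i.-1 v) /\
    (phi_t src dst b alpha i v < 0 ->
       r_le src dst b alpha i.-1 v <= - (ln (nV R V) / alpha)).
Proof.
move=> hV hsd hdeg hb a0 a4 _ i _ _ v.
have [h1 h2 h3 h4] := @weights_bound R V E src dst b alpha v hsd hdeg hb a0 a4 i.-1.
have d0 : 0 < deg R src dst v by apply: lt_le_trans (hdeg v).
have n0 : 0 < nV R V by rewrite /nV ltr0n; apply: leq_ltn_trans hV.
have tr0 : forall w : R, 0 <= trunc_w V w.
  by move=> w; rewrite /trunc_w; case: ifP => // h; apply: le_trans h; apply: ltW.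
have trpos : forall w : R, 0 < trunc_w V w -> nV R V <= w.
  by move=> w; rewrite /trunc_w; case: ifP => // _; rewrite ltxx.
have ha : alpha * alpha^-1 = 1 by apply: mulfV; rewrite gt_eqF.
have ai : 0 < alpha^-1 by rewrite invr_gt0.
rewrite /phi_t /phi_of /w_plus /w_minus.
set S := r_le _ _ _ _ _ v.
set wp := (weights_at _ _ _ _ _).1 in h1 h2 *.
set wm := (weights_at _ _ _ _ _).2 in h3 h4 *.
split.
- rewrite pmulr_lgt0 ?invr_gt0 // subr_gt0 => h.
  have hw : nV R V <= wp v by apply: trpos; apply: le_lt_trans h; apply: tr0.
  have : ln (nV R V) <= alpha * S.
    rewrite -[alpha * S]expRK ler_ln ?posrE ?expR_gt0 //.
    exact: le_trans h2.
  move=> HH.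
  have := ler_wpM2r (ltW ai) HH. rewrite mulrAC ha mul1r. done.
- rewrite pmulr_llt0 ?invr_gt0 // subr_lt0 => h.
  have hw : nV R V <= wm v by apply: trpos; apply: le_lt_trans h; apply: tr0.
  have : ln (nV R V) <= - (alpha * S).
    rewrite -[- (alpha * S)]expRK ler_ln ?posrE ?expR_gt0 //.
    exact: le_trans h4.
  move=> HH.
  have := ler_wpM2r (ltW ai) HH. rewrite mulNr mulrAC ha mul1r. by rewrite lerNr.
Qed.
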